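(* Let $d\ge1$ and let $\|\cdot\|$ be a norm on $\mathbb{R}^d$. Let $A\in\mathcal{B}(\mathbb{R}^d)$ and $a_1\in A$, with $A$ star-shaped relative to $a_1$ and $$\mathfrak{p}(A,\|\cdot-a_1\|):=\inf\Big\{\frac{\lambda_d(B(x,t)\cap A)}{\lambda_d(B(x,t))}:\ x\in A,\ 0<t\le\|x-a_1\|\Big\}>0.$$ Let $\nu=f\cdot\lambda_d$ be a probability measure on $\mathbb{R}^d$ where $f$ is almost radial non-increasing on $A$ with respect to $a_1$, with associated norm $\|\cdot\|_0$ and constant $M\in(0,1]$, and let $C_0\in[1,+\infty)$ satisfy $\frac1{C_0}\|x\|_0\le\|x\|\le C_0\|x\|_0$ for every $x\in\mathbb{R}^d$. Then for every $x\in A$ and every $t\in(0,\|x-a_1\|]$, $$\nu(B(x,t))\ge M\,\mathfrak{p}(A,\|\cdot-a_1\|)\,(2C_0^2)^{-d}\,V_d\,f(x)\,t^d.$$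
   Context: $B(x,t)=\{y:\|y-x\|\le t\}$, $\lambda_d$ Lebesgue measure, $V_d=\lambda_d(B(0,1))$. A function $f:\mathbb{R}^d\to\mathbb{R}_+$ is almost radial non-increasing on $A$ with respect to $a\in A$ if there exist a norm $\|\cdot\|_0$ on $\mathbb{R}^d$ and a constant $M\in(0,1]$ such that for all $x,y\in A\setminus\{a\}$ with $\|y-a\|_0\le\|x-a\|_0$, one has $f(y)\ge Mf(x)$. *)

(* Defs.v *)
From HB Require Import structures.
From mathcomp Require Import all_boot all_order all_algebra.
From mathcomp Require Import all_classical all_reals all_analysis.
Set Implicit Arguments. Unset Strict Implicit. Unset Printing Implicit Defensive.
Import Order.TTheory GRing.Theory Num.Theory.
Local Open Scope classical_set_scope.
Local Open Scope ring_scope.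

(* R^d is modelled as d.-tuple R, carrying the product (= Borel) sigma-algebra
   provided by MathComp-Analysis.  Vector operations are coordinatewise. *)
Section Rd.
Variables (R : realType) (d : nat).
Definition vadd (x y : d.-tuple R) : d.-tuple R := [tuple tnth x i + tnth y i | i < d].
Definition vsub (x y : d.-tuple R) : d.-tuple R := [tuple tnth x i - tnth y i | i < d].
Definition vscale (k : R) (x : d.-tuple R) : d.-tuple R := [tuple k * tnth x i | i < d].
Definition vzero : d.-tuple R := [tuple (0 : R) | i < d].

Definition is_norm (N : d.-tuple R -> R) : Prop :=
  [/\ forall x, N x = 0 -> x = vzero,
      forall k x, N (vscale k x) = `|k| * N x
    & forall x y, N (vadd x y) <= N x + N y].

Definition nball (N : d.-tuple R -> R) (x : d.-tuple R) (t : R) : set (d.-tuple R) :=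
  [set y | N (vsub y x) <= t].

(* lam is the d-dimensional Lebesgue measure: it gives every closed box its volume
   (this characterizes Lebesgue measure on the Borel sets of R^d uniquely). *)
Definition is_lebesgue_d (lam : set (d.-tuple R) -> \bar R) : Prop :=
  forall a b : d.-tuple R, (forall i, tnth a i <= tnth b i) ->
    lam [set x | forall i, tnth a i <= tnth x i <= tnth b i]
    = (\prod_(i < d) (tnth b i - tnth a i))%:E.

Definition star_shaped (A : set (d.-tuple R)) (a : d.-tuple R) : Prop :=
  forall x, A x -> forall s : R, 0 <= s <= 1 -> A (vadd a (vscale s (vsub x a))).

(* p(A, ||. - a||) as an extended real (inf of the empty set is +oo) *)
Definition pA (lam : set (d.-tuple R) -> \bar R) (N : d.-tuple R -> R)
    (A : set (d.-tuple R)) (a : d.-tuple R) : \bar R :=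
  ereal_inf [set r : \bar R | exists x t, [/\ A x, 0 < t <= N (vsub x a) &
     r = (fine (lam (nball N x t `&` A)) / fine (lam (nball N x t)))%:E]].

Definition almost_radial_nonincr_with (f : d.-tuple R -> R) (A : set (d.-tuple R))
    (a : d.-tuple R) (N0 : d.-tuple R -> R) (M : R) : Prop :=
  [/\ is_norm N0, 0 < M <= 1 &
      forall x y, A x -> x <> a -> A y -> y <> a ->
        N0 (vsub y a) <= N0 (vsub x a) -> f y >= M * f x].
End Rd.

(* Main.v *)
Require Import Defs.
From HB Require Import structures.
From mathcomp Require Import all_boot all_order all_algebra.
From mathcomp Require Import all_classical all_reals all_analysis.
From mathcomp Require Import ring lra measurable_realfun.
Import Order.TTheory GRing.Theory Num.Theory.
Local Open Scope classical_set_scope.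
Local Open Scope ring_scope.
Set Implicit Arguments. Unset Strict Implicit. Unset Printing Implicit Defensive.

Section Vec.
Variables (R : realType) (d : nat).
Implicit Types (x y z c : d.-tuple R).

Lemma tnth_vadd x y i : tnth (vadd x y) i = tnth x i + tnth y i.
Proof. by rewrite tnth_mktuple. Qed.
Lemma tnth_vsub x y i : tnth (vsub x y) i = tnth x i - tnth y i.
Proof. by rewrite tnth_mktuple. Qed.
Lemma tnth_vscale k x i : tnth (vscale k x) i = k * tnth x i.
Proof. by rewrite tnth_mktuple. Qed.
Lemma tnth_vzero i : tnth (@vzero R d) i = 0.
Proof. by rewrite tnth_mktuple. Qed.

Ltac veq := apply: eq_from_tnth => i;
  rewrite ?tnth_vadd ?tnth_vsub ?tnth_vscale ?tnth_vzero ?tnth_vadd ?tnth_vsub ?tnth_vscale ?tnth_vzero;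
  (ring || lra || idtac).

Lemma vsub_add x y z : vsub x z = vadd (vsub x y) (vsub y z).
Proof. by veq. Qed.
Lemma vsub_opp x y : vsub x y = vscale (-1) (vsub y x).
Proof. by veq. Qed.

Variable N : d.-tuple R -> R.
Hypothesis hN : is_norm N.

Lemma N_scale k x : N (vscale k x) = `|k| * N x.
Proof. by case: hN. Qed.
Lemma N_add x y : N (vadd x y) <= N x + N y.
Proof. by case: hN. Qed.
Lemma N_zero : N (@vzero R d) = 0.
Proof.
have -> : @vzero R d = vscale 0 (@vzero R d) by veq.
by rewrite N_scale normr0 mul0r.
Qed.
Lemma N_ge0 x : 0 <= N x.
Proof.
have h : @vzero R d = vadd x (vscale (-1) x) by veq.
have := N_add x (vscale (-1) x); rewrite -h N_zero N_scale normrN normr1 mul1r.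
lra.
Qed.
Lemma N_eq0 x : N x = 0 -> x = @vzero R d.
Proof. by case: hN => + _ _; apply. Qed.
Lemma N_tri x y z : N (vsub x z) <= N (vsub x y) + N (vsub y z).
Proof. by rewrite (vsub_add x y z) N_add. Qed.
Lemma N_symm x y : N (vsub x y) = N (vsub y x).
Proof. by rewrite vsub_opp N_scale normrN normr1 mul1r. Qed.

Definition ee (k : nat) : d.-tuple R := [tuple ((val j == k)%:R : R) | j < d].
Definition KN : R := \sum_(0 <= k < d) N (ee k).

Lemma KN_ge0 : 0 <= KN.
Proof. by apply: sumr_ge0 => i _; exact: N_ge0. Qed.

Lemma N_lip v (del : R) : (forall i, `|tnth v i| <= del) -> N v <= del * KN.
Proof.
move=> hv.
pose w k : d.-tuple R := [tuple (if (val j < k)%N then tnth v j else 0) | j < d].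
suff H : forall k, (k <= d)%N -> N (w k) <= del * \sum_(0 <= i < k) N (ee i).
  have -> : v = w d by apply: eq_from_tnth => j; rewrite tnth_mktuple ltn_ord.
  exact: H.
elim=> [_|k IH hk].
  have -> : w 0%N = @vzero R d by apply: eq_from_tnth => j; rewrite !tnth_mktuple.
  by rewrite N_zero big_geq // mulr0.
have hk' : (k < d)%N by [].
have e : w k.+1 = vadd (w k) (vscale (tnth v (Ordinal hk')) (ee k)).
  apply: eq_from_tnth => j; rewrite !tnth_mktuple.
  case: (ltngtP j k) => hjk.
  - by rewrite ltnS (ltnW hjk) mulr0 addr0.
  - by rewrite ltnS leqNgt hjk /= mulr0 addr0.
  - rewrite /= hjk ltnSn mulr1 add0r; congr tnth; exact: val_inj.
rewrite e big_nat_recr //= mulrDr.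
apply: (le_trans (N_add _ _)); apply: lerD; first exact: IH (ltnW hk).
rewrite N_scale ler_wpM2r //; exact: N_ge0.
Qed.

End Vec.




Section SigmaHelpers.
Variables (T : Type) (G : set (set T)).
Lemma sG0 : <<s G >> set0. Proof. exact: sigma_algebra0. Qed.
Lemma sGC A : <<s G >> A -> <<s G >> (~` A).
Proof. by move=> h; rewrite -setTD; exact: sigma_algebraCD. Qed.
Lemma sGU (F : (set T)^nat) : (forall n, <<s G >> (F n)) -> <<s G >> (\bigcup_n F n).
Proof. exact: sigma_algebra_bigcup. Qed.
Lemma sGI (F : (set T)^nat) : (forall n, <<s G >> (F n)) -> <<s G >> (\bigcap_n F n).
Proof.
move=> h; rewrite -[X in <<s G >> X]setCK setC_bigcap; apply: sGC; apply: sGU => n.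
exact: sGC.
Qed.
Lemma sGcount (U : countType) (F : U -> set T) : (forall q, <<s G >> (F q)) ->
  <<s G >> (\bigcup_(q in [set: U]) F q).
Proof.
move=> h.
pose F' (m : nat) := if @unpickle U m is Some q then F q else set0.
have -> : \bigcup_(q in [set: U]) F q = \bigcup_m F' m.
  apply/seteqP; split => y /=.
    by move=> [q _ Fq]; exists (pickle q) => //; rewrite /F' pickleK.
  move=> [m _]; rewrite /F'; case: (unpickle m) => [q Fq|//].
  by exists q.
by apply: sGU => m; rewrite /F'; case: (unpickle m) => [q|]; [exact: h|exact: sG0].
Qed.
End SigmaHelpers.

Section Grid.
Variables (R : realType) (d : nat).
Implicit Types (x y z c a b : d.-tuple R).

Definition box a b : set (d.-tuple R) := [set x | forall i, tnth a i <= tnth x i <= tnth b i].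
Definition Gbox : set (set (d.-tuple R)) := [set E | exists a b, E = box a b].

Definition delta (n : nat) : R := (n.+1%:R)^-1.
Lemma delta_gt0 n : 0 < delta n.
Proof. by rewrite /delta invr_gt0 ltr0Sn. Qed.

Definition corner n (q : d.-tuple int) : d.-tuple R := [tuple (tnth q i)%:~R * delta n | i < d].
Definition corner1 n (q : d.-tuple int) : d.-tuple R := [tuple (tnth q i + 1)%:~R * delta n | i < d].

Lemma sigma_sublevel (h : d.-tuple R -> R) (K s : R) : 0 <= K ->
  (forall y z (del : R), (forall i, `|tnth y i - tnth z i| <= del) -> h y <= h z + K * del) ->
  <<s Gbox >> [set y | h y <= s].
Proof.
move=> K0 hlip.
pose S n := \bigcup_(q in [set: d.-tuple int])
   (if h (corner n q) <= s + K * delta n then box (corner n q) (corner1 n q) else set0).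
have mS n : <<s Gbox >> (S n).
  apply: sGcount => q; case: ifP => _; last exact: sG0.
  by apply: sub_sigma_algebra; exists (corner n q), (corner1 n q).
suff -> : [set y | h y <= s] = \bigcap_n S n.
  exact: sGI.
apply/seteqP; split => y /=.
- move=> hy n _.
  pose q : d.-tuple int := [tuple Num.floor (tnth y i * (n.+1)%:R) | i < d].
  exists q => //.
  have hc : forall i, tnth (corner n q) i <= tnth y i <= tnth (corner1 n q) i.
    move=> i; rewrite !tnth_mktuple.
    have e : tnth y i = (tnth y i * (n.+1)%:R) * delta n.
      by rewrite /delta mulrK // unitfE pnatr_eq0.
    rewrite [X in _ <= X <= _]e; apply/andP; split.
      by rewrite ler_wpM2r ?(ltW (delta_gt0 n)) // floor_le.
    by rewrite ler_wpM2r ?(ltW (delta_gt0 n)) // ltW // floorD1_gt.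
  have -> : h (corner n q) <= s + K * delta n.
    apply: (le_trans (hlip _ y (delta n) _)); last by rewrite lerD2r.
    move=> i; have /andP[h1 h2] := hc i; have dp := delta_gt0 n.
    move: h1 h2; rewrite !tnth_mktuple intrD mulrDl mul1r => h1 h2.
    rewrite ler_norml; apply/andP; split; lra.
  exact: hc.
- move=> hy; apply/ler_addgt0Pr => e e0.
  have b0 : 0 <= 2 * K / e by apply: divr_ge0 => //; lra.
  have [m hb] : exists m : nat, 2 * K / e < m%:R.
    by exists (Num.bound (2 * K / e)); exact: archi_boundP.
  have [q _] := hy m I.
  case: ifP => hq; last by [].
  move=> hcell.
  have hlipy : h y <= h (corner m q) + K * delta m.
    apply: hlip => i; have /andP[h1 h2] := hcell i; have dp := delta_gt0 m.
    move: h1 h2; rewrite !tnth_mktuple intrD mulrDl mul1r => h1 h2.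
    rewrite ler_norml; apply/andP; split; lra.
  have hKd : 2 * K * delta m <= e.
    rewrite /delta ler_pdivrMr ?ltr0Sn //.
    move: hb; rewrite ltr_pdivrMr // => hb.
    have e1 : (m.+1)%:R = (m%:R + 1 : R) by rewrite mulrSr.
    rewrite e1 mulrDr mulr1 mulrC; lra.
  have := delta_gt0 m; lra.
Qed.

End Grid.



Section Meas.
Variables (R : realType) (d : nat).
Implicit Types (x y z c a b : d.-tuple R).

Lemma box_measurable a b : measurable (box a b).
Proof.
have -> : box a b = \bigcap_(i in [set: 'I_d]) ((@tnth d R ^~ i) @^-1` `[tnth a i, tnth b i]%classic).
  apply/seteqP; split => y /=.
    by move=> h i _ /=; rewrite in_itv /=; exact: h.
  by move=> h i; have := h i I; rewrite /= in_itv.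
apply: fin_bigcap_measurable; first exact: finite_finset.
move=> i _; rewrite -[X in measurable X]setTI.
by apply: measurable_tnth => //; exact: measurable_itv.
Qed.

Lemma sGbox_measurable : <<s @Gbox R d >> `<=` measurable.
Proof.
apply: smallest_sub; first exact: sigma_algebra_measurable.
by move=> _ [a [b ->]]; exact: box_measurable.
Qed.

Lemma Gbox_setI : setI_closed (@Gbox R d).
Proof.
move=> _ _ [a [b ->]] [a' [b' ->]].
exists [tuple Num.max (tnth a i) (tnth a' i) | i < d].
exists [tuple Num.min (tnth b i) (tnth b' i) | i < d].
apply/seteqP; split => y /=.
  move=> [h1 h2] i; have /andP[? ?] := h1 i; have /andP[? ?] := h2 i.
  rewrite !tnth_mktuple ge_max le_min; apply/andP; split; apply/andP; split => //.
move=> h; split => i; have := h i; rewrite !tnth_mktuple ge_max le_min;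
  by case/andP => /andP[? ?] /andP[? ?]; apply/andP.
Qed.

Definition cubeb (k : nat) : set (d.-tuple R) :=
  box [tuple - (k%:R : R) | i < d] [tuple (k%:R : R) | i < d].

Lemma cubeb_cover : \bigcup_k cubeb k = setT.
Proof.
apply/seteqP; split => // y _.
have s0 : 0 <= \sum_(i < d) `|tnth y i| by apply: sumr_ge0.
exists (Num.bound (\sum_(i < d) `|tnth y i|)) => //.
move=> i; rewrite !tnth_mktuple -ler_norml.
apply: (le_trans _ (ltW (archi_boundP s0))).
by rewrite (bigD1 i) //= lerDl sumr_ge0.
Qed.

Definition psi c (s : R) (y : d.-tuple R) : d.-tuple R := vscale s^-1 (vsub y c).

Lemma psi_measurable c s : measurable_fun setT (psi c s).
Proof.
apply/measurable_fun_tnthP => i.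
have -> : (@tnth d R ^~ i \o psi c s) = (fun y => s^-1 * (tnth y i - tnth c i)).
  by apply: funext => y; rewrite /= /psi !tnth_mktuple.
apply: (measurableT_comp (f := ( *%R s^-1))) => //.
by apply: measurable_funB => //; exact: measurable_tnth.
Qed.


Lemma le_sinv (s a u : R) : 0 < s -> (a <= s^-1 * u) = (s * a <= u).
Proof. by move=> s0; rewrite -(ler_pM2l s0) mulrA mulfV ?mul1r // gt_eqF. Qed.
Lemma ge_sinv (s b u : R) : 0 < s -> (s^-1 * u <= b) = (u <= s * b).
Proof. by move=> s0; rewrite -(ler_pM2l s0) mulrA mulfV ?mul1r // gt_eqF. Qed.

Variable N : d.-tuple R -> R.
Hypothesis hN : is_norm N.

Lemma nball_sG c s : <<s @Gbox R d >> (nball N c s).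
Proof.
apply: (@sigma_sublevel R d (fun y => N (vsub y c)) (KN N) s); first exact: KN_ge0.
move=> y z del hyz.
apply: (le_trans (N_tri hN y z c)); rewrite addrC lerD2l mulrC.
by apply: N_lip => // i; rewrite tnth_vsub.
Qed.

Lemma nball_measurable c s : measurable (nball N c s).
Proof. by apply: sGbox_measurable; exact: nball_sG. Qed.

Variable lam : {measure set (d.-tuple R) -> \bar R}.
Hypothesis hlam : is_lebesgue_d lam.

Lemma lam_ball_scale c s : 0 < s ->
  lam (nball N c s) = ((s ^+ d)%:E * lam (nball N (@vzero R d) 1))%E.
Proof.
move=> s0.
have mpsi := psi_measurable c s.
pose m2 := measure_function_pushforward__canonical__measure_function_Measure lam mpsi.
have sd0 : 0 <= s ^+ d by rewrite exprn_ge0 // ltW.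
pose m1 := mscale (NngNum sd0) lam.
have e : lam (nball N c s) = m2 (nball N (@vzero R d) 1).
  rewrite /m2 /= /pushforward; congr (lam _).
  apply/seteqP; split => y; rewrite /nball /psi /=.
    have -> : vsub (vscale s^-1 (vsub y c)) (@vzero R d) = vscale s^-1 (vsub y c).
      by apply: eq_from_tnth => i; rewrite !tnth_mktuple subr0.
    by rewrite (N_scale hN) gtr0_norm ?invr_gt0 // ge_sinv // mulr1.
  have -> : vsub (vscale s^-1 (vsub y c)) (@vzero R d) = vscale s^-1 (vsub y c).
    by apply: eq_from_tnth => i; rewrite !tnth_mktuple subr0.
  by rewrite (N_scale hN) gtr0_norm ?invr_gt0 // ge_sinv // mulr1.
have Gm : @Gbox R d `<=` measurable.
  by move=> A GA; apply: sGbox_measurable; exact: sub_sigma_algebra.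
have Gg : forall k, @Gbox R d (cubeb k).
  by move=> k; exists [tuple - (k%:R : R) | i < d], [tuple (k%:R : R) | i < d].
have m1m2 : forall A, @Gbox R d A -> m1 A = m2 A.
  move=> _ [a [b ->]]; rewrite /m1 /m2 /= /mscale /pushforward /=.
  have -> : psi c s @^-1` box a b = box (vadd c (vscale s a)) (vadd c (vscale s b)).
    apply/seteqP; split => y; rewrite /box /psi /= => h i; have := h i;
      rewrite !tnth_mktuple ?le_sinv ?ge_sinv //; case/andP => h1 h2; apply/andP; split; lra.
  case: (boolP [forall i, tnth a i <= tnth b i]) => [/forallP hab | /forallPn [i hi]].
    have h1 := hlam hab.
    have hab' : forall i, tnth (vadd c (vscale s a)) i <= tnth (vadd c (vscale s b)) i.
      by move=> i; rewrite !tnth_mktuple lerD2l ler_pM2l.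
    have h2 := hlam hab'.
    rewrite /box h1 h2 -EFinM; congr EFin.
    have -> : \prod_(i < d) (tnth (vadd c (vscale s b)) i - tnth (vadd c (vscale s a)) i)
        = \prod_(i < d) (s * (tnth b i - tnth a i)).
      by apply: eq_bigr => i _; rewrite !tnth_mktuple; ring.
    by rewrite big_split /= prodr_const card_ord.
  have hi' : tnth b i < tnth a i by rewrite ltNge.
  have -> : box a b = set0.
    apply/seteqP; split => // y h; have := h i; case/andP => ? ?; lra.
  have -> : box (vadd c (vscale s a)) (vadd c (vscale s b)) = set0.
    apply/seteqP; split => // y h; have := h i; rewrite !tnth_mktuple.
    have : s * tnth b i < s * tnth a i by rewrite ltr_pM2l.
    move=> ?; case/andP => ? ?; lra.
  by rewrite !measure0 mule0.
have m1goo : forall k, (m1 (cubeb k) < +oo)%E.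
  move=> k; rewrite /m1 /mscale /= /cubeb /box hlam.
    by rewrite -EFinM ltry.
  move=> i; rewrite !tnth_mktuple; have := ler0n R k; lra.
have hu := @g_sigma_algebra_measure_unique _ R (d.-tuple R) (@Gbox R d) Gm cubeb Gg cubeb_cover m1 m2 Gbox_setI m1m2 m1goo.
rewrite e -hu; last exact: nball_sG.
by [].
Qed.

End Meas.



Unset Implicit Arguments.

Theorem lemma2p10 (R : realType) (d : nat) (hd : (1 <= d)%N)
    (lam : {measure set (d.-tuple R) -> \bar R}) (hlam : is_lebesgue_d lam)
    (N : d.-tuple R -> R) (hN : is_norm N)
    (A : set (d.-tuple R)) (mA : measurable A) (a1 : d.-tuple R) (Aa1 : A a1)
    (hstar : star_shaped A a1)
    (hp : (0 < pA lam N A a1)%E)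
    (f : d.-tuple R -> R) (f_ge0 : forall x, 0 <= f x)
    (mf : measurable_fun setT f)
    (fprob : (\int[lam]_x (f x)%:E = 1)%E)
    (N0 : d.-tuple R -> R) (M : R)
    (hf : almost_radial_nonincr_with f A a1 N0 M)
    (C0 : R) (hC0 : 1 <= C0)
    (hequiv : forall x, C0^-1 * N0 x <= N x <= C0 * N0 x) :
  forall x, A x -> forall t : R, 0 < t <= N (vsub x a1) ->
    ((M * (2 * C0 ^+ 2) ^- d * f x * t ^+ d)%:E * pA lam N A a1
       * lam (nball N (@vzero R d) 1)
     <= \int[lam]_(y in nball N x t) (f y)%:E)%E.
Proof.
move=> x Ax t /andP[t0 tr].
case: hf => hN0 /andP[M0 M1] hfrad.
have C00 : 0 < C0 by lra.
set r := N (vsub x a1) in tr *.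
have rpos : 0 < r by lra.
set r0 := N0 (vsub x a1).
have hrr0 : r <= C0 * r0 by have /andP[] := hequiv (vsub x a1).
have hN0le : forall v, N0 v <= C0 * N v.
  move=> v; have /andP[h _] := hequiv v.
  have Ci0 : 0 < C0^-1 by rewrite invr_gt0.
  by rewrite -(ler_pM2l Ci0) mulrA mulVf ?gt_eqF // mul1r.
have xa1 : x <> a1.
  move=> e; move: rpos; rewrite /r e.
  have -> : vsub a1 a1 = @vzero R d by apply: eq_from_tnth => i; rewrite !tnth_mktuple subrr.
  by rewrite (N_zero hN) ltxx.
set u := t / (2 * r).
have u0 : 0 < u by rewrite /u divr_gt0 // mulr_gt0 // ltr0Sn.
have u1 : u <= 2^-1.
  by rewrite /u ler_pdivrMr ?mulr_gt0 // mulrA mulVf ?mul1r // pnatr_eq0.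
have ur : u * r = t / 2 by rewrite /u; field; rewrite gt_eqF.
set sc := 1 - u.
set x' := vadd a1 (vscale sc (vsub x a1)).
set t' := t / (2 * C0 ^+ 2).
have Ax' : A x' by apply: hstar => //; apply/andP; split; rewrite /sc; lra.
have ex'a : vsub x' a1 = vscale sc (vsub x a1).
  by apply: eq_from_tnth => i; rewrite !tnth_mktuple; ring.
have Nx'a : N (vsub x' a1) = sc * r.
  by rewrite ex'a (N_scale hN) ger0_norm // /sc; lra.
have N0x'a : N0 (vsub x' a1) = sc * r0.
  by rewrite ex'a (N_scale hN0) ger0_norm // /sc; lra.
have ex'x : vsub x' x = vscale (- u) (vsub x a1).
  by apply: eq_from_tnth => i; rewrite !tnth_mktuple /sc; ring.
have Nx'x : N (vsub x' x) = t / 2.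
  by rewrite ex'x (N_scale hN) normrN ger0_norm ?(ltW u0) // ur.
have t'0 : 0 < t'.
  by rewrite /t' divr_gt0 // mulr_gt0 ?ltr0Sn // exprn_gt0.
have C2 : 1 <= C0 ^+ 2 by rewrite expr2; nra.
have t't : t' <= t / 2.
  rewrite /t' ler_pdivrMr; last by rewrite mulr_gt0 ?exprn_gt0 ?ltr0Sn.
  have -> : t / 2 * (2 * C0 ^+ 2) = t * C0 ^+ 2 by field.
  nra.
have t'x' : t' <= N (vsub x' a1).
  rewrite Nx'a /sc mulrBl mul1r ur; lra.
set B' := nball N x' t'.
have hsub : B' `<=` nball N x t.
  move=> y; rewrite /B' /nball /= => hy.
  apply: (le_trans (N_tri hN y x' x)); rewrite Nx'x; lra.
have hrad : forall y, B' y -> N0 (vsub y a1) <= N0 (vsub x a1).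
  move=> y; rewrite /B' /nball /= => hy.
  have h1 : C0 * t' = u * r / C0 by rewrite ur /t'; field; rewrite gt_eqF.
  have h2 : u * r / C0 <= u * r0.
    by rewrite -mulrA ler_pM2l // ler_pdivrMr // mulrC.
  have h3 : C0 * N (vsub y x') <= C0 * t' by rewrite ler_pM2l.
  have h4 := hN0le (vsub y x').
  have h5 := N_tri hN0 y x' a1.
  move: h5; rewrite N0x'a /sc mulrBl mul1r -/r0; lra.
have mB' : measurable B' by exact: nball_measurable.
have e1 : [set a1] = box a1 a1.
  apply/seteqP; split => y /=.
    by move=> -> i; rewrite lexx.
  move=> h; apply: eq_from_tnth => i; have /andP[h1 h2] := h i.
  by apply/le_anti; rewrite h1 h2.
have ma1 : measurable [set a1] by rewrite e1; exact: box_measurable.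
have lam1 : lam [set a1] = 0%E.
  rewrite e1 /box hlam; last by move=> i; rewrite lexx.
  under eq_bigr do rewrite subrr.
  rewrite prodr_const card_ord expr0n.
  by have -> : (d == 0)%N = false by case: (d) hd.
set E := (B' `&` A) `\` [set a1].
have mE : measurable E by apply: measurableD => //; apply: measurableI.
have key2 : (lam (B' `&` A) <= lam E)%E.
  rewrite -[X in (_ <= X)%E]adde0 -lam1.
  apply: le_trans (measureU2 lam mE ma1).
  apply: le_measure; rewrite ?inE; [exact: measurableI | exact: measurableU |].
  move=> y hy; case: (pselect (y = a1)) => [->|ya]; first by right.
  by left; split.
have key3 : ((M * f x)%:E * lam E <= \int[lam]_(y in nball N x t) (f y)%:E)%E.
  rewrite -(@integral_cst _ _ _ lam E mE).
  apply: (@le_trans _ _ (\int[lam]_(y in E) (f y)%:E)%E).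
    apply: ge0_le_integral => //.
    - move=> y _ /=; rewrite lee_fin mulr_ge0 //; exact: ltW.
    - by apply/measurable_EFinP; exact: measurable_funTS.
    - move=> y [[By Ay] ya]; rewrite lee_fin.
      apply: (hfrad x y Ax xa1 Ay ya); exact: hrad.
  apply: ge0_subset_integral => //.
  - exact: nball_measurable.
  - by apply/measurable_EFinP; exact: measurable_funTS.
  - by move=> y _; rewrite lee_fin.
  - by move=> y [[By _] _]; exact: hsub.
have key1 : (pA lam N A a1 * lam B' <= lam (B' `&` A))%E.
  have hinf : (pA lam N A a1 <= (fine (lam (B' `&` A)) / fine (lam B'))%:E)%E.
    apply: ereal_inf_lbound; exists x', t'; split => //; apply/andP; split => //.
  have QL : (lam (B' `&` A) <= lam B')%E.
    by apply: le_measure; rewrite ?inE //; exact: measurableI.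
  have Q0 : (0 <= lam (B' `&` A))%E by exact: measure_ge0.
  have L0 : (0 <= lam B')%E by exact: measure_ge0.
  move: hinf QL Q0 L0; case: (lam B') => [l| |]; case: (lam (B' `&` A)) => [q| |] //=.
  - move=> hinf _ q0; rewrite lee_fin => l0.
    have [->|lne] := eqVneq l 0; first by rewrite mule0.
    apply: (le_trans (lee_wpmul2r _ hinf)); first by rewrite lee_fin.
    by rewrite -EFinM divfK.
  - by move=> hinf; have := lt_le_trans hp hinf; rewrite invr0 mulr0 ltxx.
  - by move=> hinf; have := lt_le_trans hp hinf; rewrite invr0 mulr0 ltxx.
have eqL : ((M * (2 * C0 ^+ 2) ^- d * f x * t ^+ d)%:E * pA lam N A a1
       * lam (nball N (@vzero R d) 1)
     = (M * f x)%:E * (pA lam N A a1 * lam B'))%E.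
  rewrite /B' (lam_ball_scale hN hlam x' t'0).
  have ec : M * (2 * C0 ^+ 2) ^- d * f x * t ^+ d = (M * f x) * (t' ^+ d).
    by rewrite /t' [in RHS]exprMn exprVn; ring.
  by rewrite ec EFinM -!muleA; congr (_ * _)%E; rewrite muleCA.
rewrite eqL; apply: le_trans key3.
apply: lee_wpmul2l; first by rewrite lee_fin mulr_ge0 //; exact: ltW.
exact: le_trans key1 key2.
Qed.
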